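(* Let $q$ be a prime power, let $\mathcal{F}=(\mathcal{F}_1,\ldots,\mathcal{F}_r)$ be a flag on $\mathbb{F}_{q^n}$ and let $\beta\in\mathbb{F}_{q^n}^*$. Assume the subfield $\mathbb{F}_{q^m}$ is the best friend of $\mathcal{F}$. Then $$|\mathrm{Orb}_\beta(\mathcal{F})|=\frac{|\beta|}{|\langle\beta\rangle\cap\mathbb{F}_{q^m}^*|}.$$ In particular, if $\beta$ is a primitive element of $\mathbb{F}_{q^n}$, then $|\mathrm{Orb}(\mathcal{F})|=\frac{q^n-1}{q^m-1}$.
   Context: A flag on $\mathbb{F}_{q^n}$ is a sequence $(\mathcal{F}_1,\ldots,\mathcal{F}_r)$ of $\mathbb{F}_q$-subspaces with $\{0\}\subsetneq\mathcal{F}_1\subsetneq\cdots\subsetneq\mathcal{F}_r\subsetneq\mathbb{F}_{q^n}$. For $\gamma\in\mathbb{F}_{q^n}^*$, $\mathcal{F}\gamma=(\mathcal{F}_1\gamma,\ldots,\mathcal{F}_r\gamma)$ with $\mathcal{U}\gamma=\{u\gamma:u\in\mathcal{U}\}$. For $\beta\in\mathbb{F}_{q^n}^*$ of multiplicative order $|\beta|$, $\mathrm{Orb}_\beta(\mathcal{F})=\{\mathcal{F}\beta^j:0\le j\le|\beta|-1\}$; $\mathrm{Orb}(\mathcal{F})=\{\mathcal{F}\gamma:\gamma\in\mathbb{F}_{q^n}^*\}$. A subfield $\mathbb{F}_{q^m}$ is a friend of $\mathcal{F}$ if every $\mathcal{F}_i$ is an $\mathbb{F}_{q^m}$-vector space;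 the best friend is the largest friend. *)

(* Defs.v *)
From HB Require Import structures.
From mathcomp Require Import all_boot all_order all_algebra all_field.
Set Implicit Arguments. Unset Strict Implicit. Unset Printing Implicit Defensive.
Import GRing.Theory.
Local Open Scope ring_scope.

(* Setting: F = F_q a finite field (q = #|F|), L = F_{q^n} a finite field
   extension of F (n = \dim {:L}); F_q-subspaces of L are the {vspace L};
   subfields F_{q^m} of L (containing F_q) are the {subfield L}, m = \dim K. *)

Section FlagDefs.
Variables (F : finFieldType) (L : fieldExtType F).

Definition is_flag (Fs : seq {vspace L}) : bool :=
  [&& (0 < size Fs)%N,
      path (fun U V : {vspace L} => (U <= V)%VS && (U != V)) 0%VS Fs
    & (last 0%VS Fs != fullv)].

Definition vsmul (U : {vspace L}) (g : L) : {vspace L} := (U * <[g]>)%VS.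

Definition flag_mul (Fs : seq {vspace L}) (g : L) : seq {vspace L} :=
  map (fun U => vsmul U g) Fs.

Definition is_morder (b : L) (k : nat) : Prop :=
  [/\ (0 < k)%N, b ^+ k = 1 & forall j, (0 < j < k)%N -> b ^+ j != 1].

Definition orb_beta (Fs : seq {vspace L}) (b : L) (k : nat) : seq (seq {vspace L}) :=
  undup [seq flag_mul Fs (b ^+ j) | j <- iota 0 k].

Definition orb (Fs : seq {vspace L}) : seq (seq {vspace L}) :=
  undup [seq flag_mul Fs (g : L) | g <- enum (finvect_type L) & (g : L) != 0].

(* |<beta> /\ K^*| : number of j < |beta| with beta^j in K
   (the beta^j, j < |beta|, are the distinct elements of <beta>, all nonzero) *)
Definition cyc_cap (b : L) (k : nat) (K : {subfield L}) : nat :=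
  size [seq j <- iota 0 k | b ^+ j \in K].

(* K is a friend of the flag: every F_i is a K-vector space *)
Definition friend (K : {subfield L}) (Fs : seq {vspace L}) : bool :=
  all (fun U : {vspace L} => (K * U <= U)%VS) Fs.

Definition best_friend (K : {subfield L}) (Fs : seq {vspace L}) : Prop :=
  friend K Fs /\ forall K' : {subfield L}, friend K' Fs -> (K' <= K)%VS.
End FlagDefs.

(* Main.v *)
Require Import Defs.
From HB Require Import structures.
From mathcomp Require Import all_boot all_order all_algebra all_field.
Import GRing.Theory.
Local Open Scope ring_scope.

Section Stab.
Variables (F : finFieldType) (L : fieldExtType F).

Lemma vsmulM (U : {vspace L}) x y : vsmul (vsmul U x) y = vsmul U (x * y).
Proof. by rewrite /vsmul -prodvA prodv_line. Qed.

Lemma vsmul1 (U : {vspace L}) : vsmul U 1 = U.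
Proof. by rewrite /vsmul prodv1. Qed.

Variables (Fs : seq {vspace L}) (K : {subfield L}).
Hypothesis bf : best_friend K Fs.

Lemma stabK t : t != 0 -> ({in Fs, forall U, vsmul U t = U} <-> t \in K).
Proof.
move=> nt; case: bf => /allP fr maxK; split => [H | Kt].
  have fr' : friend <<K; t>>%AS Fs.
    apply/allP => U UF; have KU := fr U UF.
    have Ut: forall i w, w \in U -> t ^+ i * w \in U.
      elim=> [|i IH] w Uw; first by rewrite expr0 mul1r.
      rewrite exprS -mulrA; have := IH w Uw.
      move: (t ^+ i * w) => v Uv.
      have := memv_mul Uv (memv_line t); rewrite -/(vsmul U t) H // mulrC //.
    apply/prodvP => a u Ka Uu.
    rewrite -(Fadjoin_poly_eq Ka) horner_coef mulr_suml; apply: rpred_sum => i _.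
    rewrite -mulrA; apply: (subvP KU); apply: memv_mul; last exact: Ut.
    exact: (polyOverP (Fadjoin_polyOver K t a)).
  by apply: (subvP (maxK _ fr')); exact: memv_adjoin.
have sub : forall x, x \in K -> {in Fs, forall U, (vsmul U x <= U)%VS}.
  move=> x Kx U UF; apply/prodvP => u v Uu /vlineP[a ->].
  rewrite -scalerAr mulrC memvZ //; exact: (subvP (fr U UF)) (memv_mul Kx Uu).
move=> U UF; apply/eqP; rewrite eqEsubv sub //=.
have := prodvSl <[t]>%VS (sub t^-1 _ U UF); rewrite memvV => /(_ Kt).
by rewrite -/(vsmul _ t) vsmulM mulVf // vsmul1.
Qed.

Lemma flag_eq x y : x != 0 -> y != 0 ->
  (flag_mul Fs y == flag_mul Fs x) = (y / x \in K).
Proof.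
move=> nx ny; have nt : y / x != 0 by rewrite mulf_neq0 ?invr_eq0.
apply/eqP/idP => [E | Kt].
  have := proj1 (@stabK _ nt); apply => U UF. move/eq_in_map: E => /(_ U UF) E.
  by rewrite -(vsmulM U y) E vsmulM mulfV // vsmul1.
apply/eq_in_map => U UF.
have E': vsmul U (y / x) = U by exact: (proj2 (@stabK _ nt) Kt U UF).
by rewrite -[in RHS]E' vsmulM divfK.
Qed.

Lemma fiber_count (T U : eqType) (f : T -> U) (s : seq T) c :
  (forall x, x \in s -> count (fun y => f y == f x) s = c) ->
  (size (undup (map f s)) * c = size s)%N.
Proof.
move=> Hc.
set r := undup (map f s).
have ->: size s = (\sum_(x <- s) \sum_(y <- r) (f x == y))%N.
  rewrite -sum1_size; apply: eq_big_seq => x xs.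
  transitivity (count_mem (f x) r); last first.
    rewrite -sum1_count big_mkcond /=; apply: eq_bigr => y _.
    by rewrite eq_sym; case: eqP.
  by rewrite count_uniq_mem ?undup_uniq // mem_undup map_f.
rewrite exchange_big /=.
transitivity (\sum_(y <- r) c)%N.
  by rewrite big_const_seq count_predT iter_addn_0 mulnC.
apply: eq_big_seq => y; rewrite mem_undup => /mapP[x xs ->].
rewrite -(Hc x xs) -sum1_count big_mkcond /=; apply: eq_bigr => z _.
by case: eqP.
Qed.

Lemma orbit_count (s : seq L) : uniq s -> (forall x, x \in s -> x != 0) ->
  (forall x y, x \in s -> y \in s -> y / x \in s) ->
  (size (undup (map (flag_mul Fs) s)) * count (mem K) s = size s)%N.
Proof.
move=> us nz cl; apply: fiber_count => x xs.
transitivity (count (fun y => y / x \in K) s).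
  by apply: eq_in_count => y ys; rewrite flag_eq ?nz.
have nx := nz x xs.
have P : perm_eq (map (fun y => y / x) s) s.
  have U1 : uniq (map (fun y => y / x) s).
    by rewrite map_inj_uniq // => a c /(mulIf (invr_neq0 nx)).
  have sub : {subset map (fun y => y / x) s <= s}.
    by move=> z /mapP[y ys ->]; exact: cl.
  have [|_ E] := uniq_min_size U1 sub; first by rewrite size_map.
  by rewrite uniq_perm.
by rewrite -(permP P (mem K)) count_map.
Qed.
End Stab.

Lemma cnt (T : finType) (P : pred T) : count P (enum T) = #|P|.
Proof. rewrite cardE /enum_mem size_filter count_filter; by apply: eq_count => x; rewrite /= andbT. Qed.

Section Main.
Variables (F : finFieldType) (L : fieldExtType F).
Let T := finvect_type L.
Lemma cardK (K : {vspace L}) : #|[pred x : T | (x : L) \in K]| = (#|F| ^ \dim K)%N.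
Proof. have := @card_vspace F T _ K. by []. Qed.
Lemma cardT : #|T| = (#|F| ^ \dim {:L})%N.
Proof. rewrite -cardK; apply: eq_card => x; by rewrite inE memvf. Qed.

Lemma cardK0 (K : {vspace L}) :
  #|[pred x : T | ((x : L) \in K) && ((x : L) != 0)]| = (#|F| ^ \dim K - 1)%N.
Proof.
rewrite -cardK [in RHS](cardD1 (0 : T)) inE mem0v add1n subn1 /=.
by apply: eq_card => x; rewrite !inE andbC.
Qed.

Lemma cardT0 : #|[pred x : T | (x : L) != 0]| = (#|F| ^ \dim {:L} - 1)%N.
Proof. rewrite -cardK0; apply: eq_card => x; by rewrite !inE memvf. Qed.
End Main.

Theorem proposition4p1 (F : finFieldType) (L : fieldExtType F)
    (Fs : seq {vspace L}) (K : {subfield L}) (b : L) (k : nat) :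
  is_flag Fs -> best_friend K Fs -> b != 0 -> is_morder b k ->
  (size (orb_beta Fs b k) * cyc_cap b k K = k)%N /\
  (size (orb Fs) * (#|F| ^ \dim K - 1) = #|F| ^ \dim {:L} - 1)%N.
Proof.
move=> _ bf nb [k0 bk bmin]; split.
  set s := map (fun j => b ^+ j) (iota 0 k).
  have -> : orb_beta Fs b k = undup (map (flag_mul Fs) s) by rewrite /orb_beta -map_comp.
  have -> : cyc_cap b k K = count (mem K) s by rewrite /cyc_cap size_filter count_map.
  rewrite (@orbit_count _ _ _ _ bf); first by rewrite size_map size_iota.
  - have key : forall i j, (i < j < k)%N -> b ^+ i != b ^+ j.
      move=> i j /andP[ij jk]; apply/eqP => E.
      have : b ^+ i * b ^+ (j - i) = b ^+ i * 1 by rewrite -exprD (subnKC (ltnW ij)) -E mulr1.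
      move/(mulfI (expf_neq0 i nb)); apply/eqP; apply: bmin.
      by rewrite subn_gt0 ij /= (leq_ltn_trans (leq_subr _ _) jk).
    rewrite map_inj_in_uniq ?iota_uniq // => i j; rewrite !mem_iota !add0n /= => ik jk E.
    case: (ltngtP i j) => // [ij|ji].
      by have := key i j; rewrite ij jk E eqxx => /(_ isT).
    by have := key j i; rewrite ji ik E eqxx => /(_ isT).
  - by move=> x /mapP[j _ ->]; rewrite expf_neq0.
  move=> x y /mapP[j]; rewrite mem_iota add0n /= => jk -> /mapP[i _ ->].
  apply/mapP; exists ((i + (k - j)) %% k)%N; first by rewrite mem_iota add0n ltn_pmod.
  have bkj : b ^+ (k - j) = (b ^+ j)^-1.
    apply: (mulfI (expf_neq0 j nb)); rewrite -exprD (subnKC (ltnW jk)) bk mulfV //.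
    exact: expf_neq0.
  rewrite -bkj -exprD [in LHS](divn_eq (i + (k - j)) k) exprD mulnC exprM bk expr1n mul1r.
  by [].
rewrite -(@cardK0 _ _ K) -cardT0.
set s2 := [seq g <- enum (finvect_type L) | (g : L) != 0].
have -> : orb Fs = undup (map (flag_mul Fs) s2) by [].
have -> : #|[pred x : finvect_type L | ((x : L) \in K) && ((x : L) != 0)]| = count (mem K) s2.
  by rewrite count_filter -cnt; apply: eq_count => x; rewrite !inE.
have -> : #|[pred x : finvect_type L | (x : L) != 0]| = size s2 by rewrite size_filter -cnt.
apply: (@orbit_count _ _ _ _ bf).
- exact/filter_uniq/enum_uniq.
- by move=> x; rewrite mem_filter => /andP[].
move=> x y; rewrite !mem_filter => /andP[nx _] /andP[ny _].
rewrite mulf_neq0 ?invr_eq0 //. move: (mem_enum (finvect_type L) (y / x)); rewrite enumT => h; exact: (etrans h (erefl true)).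
Qed.
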